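(* Let $t\mapsto\zeta(t)=(\xi(t),\eta(t))$, $t\in I$, be a solution of the alternative system (Alt) such that for all $t\in I$: $f_{\mathrm{holdup}}'(L^j(t))\neq0$ for $j=1,\dots,S-1$ and $\sum_{i=1}^C\partial_Tf_{\mathrm{vle},i}(P(t),T^j(t),\mathbf x^j(t))\neq0$ for $j=1,\dots,S$. Then the Jacobian $D_\eta g(\zeta(t))$ is non-singular for every $t\in I$ if and only if for every $t\in I$ $-\epsilon f_{\mathrm{hl}}(T^S,\mathbf x^S)-\epsilon\,\mathbf a(P,T^S,\mathbf x^S)\cdot(\mathbf y^S-\mathbf x^S)-(1-\epsilon)f_{\mathrm{hl}}(T^{\mathrm{cond}},\mathbf y^S)+f_{\mathrm{hv}}(T^S,\mathbf y^S)\neq0$ and, for every $j\in\{S-1,\dots,1\}$, $-f_{\mathrm{hl}}(T^j,\mathbf x^j)-\mathbf a(P,T^j,\mathbf x^j)\cdot(\mathbf y^j-\mathbf x^j)+f_{\mathrm{hv}}(T^j,\mathbf y^j)\neq0$ (all quantities evaluated at time $t$).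
   Context: Fix integers $S\ge 2$, $C\ge 2$ and an interval $I\subset\mathbb R$. Given are real functions $f_{\mathrm{vle},i}(P,T,\mathbf x)$ ($i=1,\dots,C$) and $f_{\mathrm{hl}}(T,\mathbf x)$ that are twice continuously differentiable, and continuously differentiable $f_{\mathrm{hv}}(T,\mathbf y)$, $f_{\mathrm{holdup}}(L)$. Controls are continuously differentiable real functions $\epsilon,P,Q,T^{\mathrm{cond}}$ on $I$. State variables: $n^j,H^j,T^j,V^j$, $\mathbf x^j,\mathbf y^j\in\mathbb R^C$ ($j=1,\dots,S$), $L^j$ ($j=1,\dots,S-1$); a solution is a tuple of continuously differentiable state functions satisfying all equations at every $t\in I$. ''$2\le j\le S-1$'' marks middle-stage equations. Wherever $\sum_i\partial_Tf_{\mathrm{vle},i}(P,T,\mathbf x)\neq0$ define $\mathbf a(P,T,\mathbf x):=\nabla_{\mathbf x}f_{\mathrm{hl}}(T,\mathbf x)-\partial_Tf_{\mathrm{hl}}(T,\mathbf x)\frac{\sum_i\nabla_{\mathbf x}f_{\mathrm{vle},i}(P,T,\mathbf x)}{\sum_i\partial_Tf_{\mathrm{vle},i}(P,T,\mathbf x)}$, $b(P,T,\mathbf x):=-\partial_Tf_{\mathrm{hl}}(T,\mathbf x)\frac{\sum_i\partial_Pf_{\mathrm{vle},i}(P,T,\mathbf x)}{\sum_i\partial_Tf_{\mathrm{vle},i}(P,T,\mathbf x)}$. System (Alt) consists of (TM) $\dot n^1=L^1-V^1$; $\dot n^j=L^j-V^j-L^{j-1}+V^{j-1}$ ($2\le j\le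 S-1$); $\dot n^S=-\epsilon V^S-L^{S-1}+V^{S-1}$; (CM$_0$) for $i=1,\dots,C-1$: $\dot x_i^1=\big(L^1(x_i^2-x_i^1)-V^1(y_i^1-x_i^1)\big)/n^1$; $\dot x_i^j=\big(L^j(x_i^{j+1}-x_i^j)-V^j(y_i^j-x_i^j)+V^{j-1}(y_i^{j-1}-x_i^j)\big)/n^j$ ($2\le j\le S-1$); $\dot x_i^S=\big(\epsilon V^S(x_i^S-y_i^S)+V^{S-1}(y_i^{S-1}-x_i^S)\big)/n^S$; and the algebraic equations $g=0$ where (left minus right side): $\mathrm{aebal}^1=(L^1-V^1)f_{\mathrm{hl}}(T^1,\mathbf x^1)+\mathbf a(P,T^1,\mathbf x^1)\cdot\big(L^1(\mathbf x^2-\mathbf x^1)-V^1(\mathbf y^1-\mathbf x^1)\big)+n^1b(P,T^1,\mathbf x^1)\dot P-\big(L^1f_{\mathrm{hl}}(T^2,\mathbf x^2)-V^1f_{\mathrm{hv}}(T^1,\mathbf y^1)+Q\big)$; for $2\le j\le S-1$: $\mathrm{aebal}^j=(L^j-V^j-L^{j-1}+V^{j-1})f_{\mathrm{hl}}(T^j,\mathbf x^j)+\mathbf a(P,T^j,\mathbf x^j)\cdot\big(L^j(\mathbf x^{j+1}-\mathbf x^j)-V^j(\mathbf y^j-\mathbf x^j)+V^{j-1}(\mathbf y^{j-1}-\mathbf x^j)\big)+n^jb(P,T^j,\mathbf x^j)\dot P-\big(L^jf_{\mathrm{hl}}(T^{j+1},\mathbf x^{j+1})-V^jf_{\mathrm{hv}}(T^j,\mathbf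 y^j)-L^{j-1}f_{\mathrm{hl}}(T^j,\mathbf x^j)+V^{j-1}f_{\mathrm{hv}}(T^{j-1},\mathbf y^{j-1})\big)$; $\mathrm{aebal}^S=(-\epsilon V^S-L^{S-1}+V^{S-1})f_{\mathrm{hl}}(T^S,\mathbf x^S)+\mathbf a(P,T^S,\mathbf x^S)\cdot\big(-\epsilon V^S(\mathbf y^S-\mathbf x^S)+V^{S-1}(\mathbf y^{S-1}-\mathbf x^S)\big)+n^Sb(P,T^S,\mathbf x^S)\dot P-\big((1-\epsilon)V^Sf_{\mathrm{hl}}(T^{\mathrm{cond}},\mathbf y^S)-V^Sf_{\mathrm{hv}}(T^S,\mathbf y^S)-L^{S-1}f_{\mathrm{hl}}(T^S,\mathbf x^S)+V^{S-1}f_{\mathrm{hv}}(T^{S-1},\mathbf y^{S-1})\big)$; $\mathrm{ydef}_i^j=y_i^j-f_{\mathrm{vle},i}(P,T^j,\mathbf x^j)$, $\mathbf{ydef}^j=(\mathrm{ydef}^j_1,\dots,\mathrm{ydef}^j_C)$; $\mathrm{edef}^j=H^j-n^jf_{\mathrm{hl}}(T^j,\mathbf x^j)$; $\mathrm{ysum}^j=\sum_{i=1}^Cf_{\mathrm{vle},i}(P,T^j,\mathbf x^j)-1$; $\mathrm{xsum}^j=x_C^j-1+\sum_{i=1}^{C-1}x_i^j$; $\mathrm{hold}^j=n^j-f_{\mathrm{holdup}}(L^{j-1})$ ($j=2,\dots,S$); ordered as $g=(\mathrm{aebal}^S,\dots,\mathrm{aebal}^1,\mathbf{ydef}^1,\dots,\mathbf{ydef}^S,\mathrm{edef}^1,\dots,\mathrm{edef}^S,\mathrm{ysum}^1,\dots,\mathrm{ysum}^S,\mathrm{xsum}^1,\dots,\mathrm{xsum}^S,\mathrm{hold}^2,\dots,\mathrm{hold}^S)$.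 Differential variables $\xi=(n^1,\dots,n^S,\hat{\mathbf x}^1,\dots,\hat{\mathbf x}^S)$, $\hat{\mathbf x}^j=(x^j_1,\dots,x^j_{C-1})$; algebraic variables $\eta=(V^S,\dots,V^1,\mathbf y^1,\dots,\mathbf y^S,H^1,\dots,H^S,T^1,\dots,T^S,x_C^1,\dots,x_C^S,L^1,\dots,L^{S-1})$. $D_\eta g$ is the Jacobian of $g$ with respect to $\eta$ (with $\xi$ and controls held fixed). *)

(* Defs.v *)
From HB Require Import structures.
From mathcomp Require Import all_boot all_order all_algebra.
From mathcomp Require Import all_classical all_reals all_analysis.
Set Implicit Arguments. Unset Strict Implicit. Unset Printing Implicit Defensive.
Import Order.TTheory GRing.Theory Num.Theory.
Import numFieldNormedType.Exports.
Local Open Scope classical_set_scope.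
Local Open Scope ring_scope.

Section Regularity.
Variable R : realType.

Definition partial m (F : 'rV[R]_m -> R) (k : 'I_m) (z : 'rV[R]_m) : R :=
  derive1 (fun h : R => F (z + h *: delta_mx 0 k)) 0.

Definition C1 m (F : 'rV[R]_m -> R) : Prop :=
  (forall k z, derivable (fun h : R => F (z + h *: delta_mx 0 k)) 0 1) /\
  (forall k, continuous (partial F k)).

Definition C2 m (F : 'rV[R]_m -> R) : Prop :=
  C1 F /\ (forall k, C1 (partial F k)).

Definition C1fun (f : R -> R) : Prop :=
  (forall z, derivable f z 1) /\ continuous (derive1 f).

Definition uncurry3 C (f : R -> R -> 'rV[R]_C -> R) : 'rV[R]_(1 + (1 + C)) -> R :=
  fun z => f (lsubmx z ord0 ord0) (lsubmx (rsubmx z) ord0 ord0) (rsubmx (rsubmx z)).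
Definition uncurry2 C (f : R -> 'rV[R]_C -> R) : 'rV[R]_(1 + C) -> R :=
  fun z => f (lsubmx z ord0 ord0) (rsubmx z).

(** Derivative of a real function relative to a set I (one-sided at endpoints
    of an interval). *)
Definition dquot (f : R -> R) (t : R) : R -> R := fun h => h^-1 * (f (h + t) - f t).
Definition derivI (I : set R) (f : R -> R) (t : R) : R :=
  lim (dquot f t @ within (fun h => I (h + t)) 0^').
Definition C1_on (I : set R) (f : R -> R) : Prop :=
  (forall t, I t -> exists d : R, dquot f t @ within (fun h => I (h + t)) 0^' --> d) /\
  {within I, continuous (derivI I f)}.

End Regularity.

Section Column.
Variable R : realType.
Variables S C : nat.
(** fvle i is f_vle,(i+1); fhl, fhv, fholdup as in the paper. *)
Variable fvle : 'I_C -> R -> R -> 'rV[R]_C -> R.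
Variable fhl : R -> 'rV[R]_C -> R.
Variable fhv : R -> 'rV[R]_C -> R.
Variable fholdup : R -> R.

Definition dotv (u v : 'rV[R]_C) : R := \sum_(i < C) u ord0 i * v ord0 i.

Definition dT3 (f : R -> R -> 'rV[R]_C -> R) P T x : R := derive1 (fun T' => f P T' x) T.
Definition dP3 (f : R -> R -> 'rV[R]_C -> R) P T x : R := derive1 (fun P' => f P' T x) P.
Definition gradx3 (f : R -> R -> 'rV[R]_C -> R) P T x : 'rV[R]_C :=
  \row_(i < C) derive1 (fun h : R => f P T (x + h *: delta_mx 0 i)) 0.
Definition dT2 (f : R -> 'rV[R]_C -> R) T x : R := derive1 (fun T' => f T' x) T.
Definition gradx2 (f : R -> 'rV[R]_C -> R) T x : 'rV[R]_C :=
  \row_(i < C) derive1 (fun h : R => f T (x + h *: delta_mx 0 i)) 0.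

Definition sdT P T x : R := \sum_(i < C) dT3 (fvle i) P T x.

Definition avec P T x : 'rV[R]_C :=
  gradx2 fhl T x - (dT2 fhl T x / sdT P T x) *: (\sum_(i < C) gradx3 (fvle i) P T x).
Definition bsc P T x : R :=
  - dT2 fhl T x * ((\sum_(i < C) dP3 (fvle i) P T x) / sdT P T x).

(** Values of the algebraic variables (stages 1-based, components 1-based). *)
Record algv := AlgV {
  aV : nat -> R; ay : nat -> nat -> R; aH : nat -> R;
  aT : nat -> R; axC : nat -> R; aL : nat -> R }.

(** Index type of eta (and of g), in the order of the paper:
    V^S..V^1 | y^1..y^S | H^1..H^S | T^1..T^S | x_C^1..x_C^S | L^1..L^{S-1}. *)
Definition Idx := ('I_S + 'I_S * 'I_C + 'I_S + 'I_S + 'I_S + 'I_S.-1)%type.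

Section AtPoint.
(* controls and Pdot at the given time, differential variables n, xh
   (xh j i = x_i^j for 1 <= i <= C-1) *)
Variables (eps P Q Tc Pdot : R) (n : nat -> R) (xh : nat -> nat -> R).

Definition xrow (e : algv) (j : nat) : 'rV[R]_C :=
  \row_(i < C) (if i.+1 == C then axC e j else xh j i.+1).
Definition yrow (e : algv) (j : nat) : 'rV[R]_C := \row_(i < C) ay e j i.+1.

Definition aebal (e : algv) (j : nat) : R :=
  let x := xrow e in let y := yrow e in
  let V := aV e in let L := aL e in let T := aT e in
  if j == 1%N then
    (L 1 - V 1) * fhl (T 1) (x 1)
    + dotv (avec P (T 1) (x 1)) (L 1 *: (x 2 - x 1) - V 1 *: (y 1 - x 1))
    + n 1 * bsc P (T 1) (x 1) * Pdot
    - (L 1 * fhl (T 2) (x 2) - V 1 * fhv (T 1) (y 1) + Q)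
  else if j == S then
    (- eps * V S - L S.-1 + V S.-1) * fhl (T S) (x S)
    + dotv (avec P (T S) (x S))
        (- (eps * V S) *: (y S - x S) + V S.-1 *: (y S.-1 - x S))
    + n S * bsc P (T S) (x S) * Pdot
    - ((1 - eps) * V S * fhl Tc (y S) - V S * fhv (T S) (y S)
       - L S.-1 * fhl (T S) (x S) + V S.-1 * fhv (T S.-1) (y S.-1))
  else
    (L j - V j - L j.-1 + V j.-1) * fhl (T j) (x j)
    + dotv (avec P (T j) (x j))
        (L j *: (x j.+1 - x j) - V j *: (y j - x j) + V j.-1 *: (y j.-1 - x j))
    + n j * bsc P (T j) (x j) * Pdot
    - (L j * fhl (T j.+1) (x j.+1) - V j * fhv (T j) (y j)
       - L j.-1 * fhl (T j) (x j) + V j.-1 * fhv (T j.-1) (y j.-1)).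

(** ydef_(i+1)^j for i : 'I_C *)
Definition ydef (e : algv) (j : nat) (i : 'I_C) : R :=
  ay e j i.+1 - fvle i P (aT e j) (xrow e j).
Definition edef (e : algv) (j : nat) : R := aH e j - n j * fhl (aT e j) (xrow e j).
Definition ysum (e : algv) (j : nat) : R :=
  \sum_(i < C) fvle i P (aT e j) (xrow e j) - 1.
Definition xsum (e : algv) (j : nat) : R :=
  axC e j - 1 + \sum_(1 <= i < C) xh j i.
Definition hold (e : algv) (j : nat) : R := n j - fholdup (aL e j.-1).

(** The algebraic equations g, indexed like eta:
    aebal^S..aebal^1 | ydef^1..ydef^S | edef | ysum | xsum | hold^2..hold^S. *)
Definition gres (e : algv) (k : Idx) : R :=
  match k with
  | inl (inl (inl (inl (inl k)))) => aebal e (S - k)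
  | inl (inl (inl (inl (inr (k, i))))) => ydef e k.+1 i
  | inl (inl (inl (inr k))) => edef e k.+1
  | inl (inl (inr k)) => ysum e k.+1
  | inl (inr k) => xsum e k.+1
  | inr k => hold e k.+2
  end.

Definition updn (f : nat -> R) (j : nat) (h : R) : nat -> R :=
  fun m => if m == j then f m + h else f m.
Definition updn2 (f : nat -> nat -> R) (j i : nat) (h : R) : nat -> nat -> R :=
  fun m l => if (m == j) && (l == i) then f m l + h else f m l.

Definition pert (e : algv) (k : Idx) (h : R) : algv :=
  match k with
  | inl (inl (inl (inl (inl k)))) =>
      AlgV (updn (aV e) (S - k) h) (ay e) (aH e) (aT e) (axC e) (aL e)
  | inl (inl (inl (inl (inr (k, i))))) =>
      AlgV (aV e) (updn2 (ay e) k.+1 i.+1 h) (aH e) (aT e) (axC e) (aL e)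
  | inl (inl (inl (inr k))) =>
      AlgV (aV e) (ay e) (updn (aH e) k.+1 h) (aT e) (axC e) (aL e)
  | inl (inl (inr k)) =>
      AlgV (aV e) (ay e) (aH e) (updn (aT e) k.+1 h) (axC e) (aL e)
  | inl (inr k) =>
      AlgV (aV e) (ay e) (aH e) (aT e) (updn (axC e) k.+1 h) (aL e)
  | inr k =>
      AlgV (aV e) (ay e) (aH e) (aT e) (axC e) (updn (aL e) k.+1 h)
  end.

Definition jac (e : algv) : 'M[R]_#|{: Idx}| :=
  \matrix_(r, c) derive1 (fun h : R => gres (pert e (enum_val c) h) (enum_val r)) 0.

End AtPoint.

Section Solution.
Variables (I : set R) (eps P Q Tc : R -> R).
Variables (n V H T L : nat -> R -> R) (x y : nat -> nat -> R -> R).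
(* x j i t = x_i^j(t), y j i t = y_i^j(t), 1-based j and i *)

Definition alg_at (t : R) : algv :=
  AlgV (fun j => V j t) (fun j i => y j i t) (fun j => H j t)
       (fun j => T j t) (fun j => x j C t) (fun j => L j t).
Definition n_at (t : R) : nat -> R := fun j => n j t.
Definition x_at (t : R) : nat -> nat -> R := fun j i => x j i t.
Definition Pdot_at (t : R) : R := derivI I P t.

Definition xvec (j : nat) (t : R) : 'rV[R]_C := \row_(i < C) x j i.+1 t.
Definition yvec (j : nat) (t : R) : 'rV[R]_C := \row_(i < C) y j i.+1 t.

Definition jac_at (t : R) : 'M[R]_#|{: Idx}| :=
  jac (eps t) (P t) (Q t) (Tc t) (Pdot_at t) (n_at t) (x_at t) (alg_at t).

Definition is_solution : Prop :=
  (forall j, (1 <= j <= S)%N ->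
     [/\ C1_on I (n j), C1_on I (H j), C1_on I (T j) & C1_on I (V j)]) /\
  (forall j i, (1 <= j <= S)%N -> (1 <= i <= C)%N ->
     C1_on I (x j i) /\ C1_on I (y j i)) /\
  (forall j, (1 <= j <= S.-1)%N -> C1_on I (L j)) /\
  (forall t, I t ->
    derivI I (n 1) t = L 1 t - V 1 t /\
    (forall j, (2 <= j <= S.-1)%N ->
       derivI I (n j) t = L j t - V j t - L j.-1 t + V j.-1 t) /\
    derivI I (n S) t = - eps t * V S t - L S.-1 t + V S.-1 t /\
    (forall i, (1 <= i <= C.-1)%N ->
      derivI I (x 1 i) t =
        (L 1 t * (x 2 i t - x 1 i t) - V 1 t * (y 1 i t - x 1 i t)) / n 1 t /\
      (forall j, (2 <= j <= S.-1)%N ->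
        derivI I (x j i) t =
          (L j t * (x j.+1 i t - x j i t) - V j t * (y j i t - x j i t)
           + V j.-1 t * (y j.-1 i t - x j i t)) / n j t) /\
      derivI I (x S i) t =
        (eps t * V S t * (x S i t - y S i t)
         + V S.-1 t * (y S.-1 i t - x S i t)) / n S t) /\
    (forall k : Idx,
       gres (eps t) (P t) (Q t) (Tc t) (Pdot_at t) (n_at t) (x_at t) (alg_at t) k = 0)).

End Solution.

End Column.

(* Main.v *)
Require Import Defs.
From HB Require Import structures.
From mathcomp Require Import all_boot all_order all_algebra.
From mathcomp Require Import all_classical all_reals all_analysis.
Import Order.TTheory GRing.Theory Num.Theory.
Import numFieldNormedType.Exports.
Local Open Scope classical_set_scope.
Local Open Scope ring_scope.
From mathcomp Require Import ring lra zify.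

Lemma d1_const (R : realType) (f : R -> R) : (forall h, f h = f 0) -> derive1 f 0 = 0.
Proof.
move=> hf; have -> : f = cst (f 0) by apply/funext => h; rewrite hf.
exact: derive1_cst.
Qed.
Lemma d1_shift (R : realType) (g : R -> R) c :
  derive1 (fun h => g (h + c)) 0 = derive1 g c.
Proof.
rewrite /derive1.
suff -> : (fun h : R => h^-1 *: ((fun h => g (h + c)) (h + 0) - (fun h => g (h + c)) 0))
  = (fun h => h^-1 *: (g (h + c) - g c)) by [].
by apply/funext => h; rewrite /= !add0r addr0.
Qed.
Lemma dable_shift (R : realType) (g : R -> R) c :
  derivable g c 1 -> derivable (fun h => g (h + c)) 0 1.
Proof.
rewrite /derivable /=.
suff -> : (fun h : R => h^-1 *: (g (h *: 1 + 0 + c) - g (0 + c)))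
  = (fun h => h^-1 *: (g (h *: 1 + c) - g c)) by [].
by apply/funext => h; rewrite /= !add0r addr0.
Qed.
Lemma d1_affine (R : realType) (a b : R) : derive1 (fun h => a + h * b) 0 = b.
Proof.
rewrite derive1E.
have -> : (fun h => a + h * b) = cst a + b \*: id.
  by apply/funext => h; rewrite /= mulrC.
have H := is_deriveD (is_derive_cst a (0:R) 1) (is_deriveZ b (is_derive_id (0:R) 1)).
rewrite (@derive_val _ _ _ _ _ _ _ H) add0r; exact: mulr1.
Qed.
Lemma d1_negshift (R : realType) (a : R) (g : R -> R) c : derivable g c 1 ->
  derive1 (fun h => a - g (c + h)) 0 = - derive1 g c.
Proof.
move=> dg; rewrite -(@d1_shift _ g c) !derive1E.
have -> : (fun h => a - g (c + h)) = cst a - (fun h => g (h + c)).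
  by apply/funext => h; rewrite [c + h]addrC.
rewrite deriveB ?derive_cst ?sub0r //; last exact: dable_shift.
Qed.

Lemma d1_sumshift (R : realType) C (g : 'I_C -> R -> R) c :
  (forall i, derivable (g i) c 1) ->
  derive1 (fun h => \sum_(i < C) g i (c + h) - 1) 0 = \sum_(i < C) derive1 (g i) c.
Proof.
move=> dg; rewrite derive1E.
have -> : (fun h => \sum_(i < C) g i (c + h) - 1) =
   (\sum_(i < C) (fun h => g i (h + c))) - cst 1.
  apply/funext => h; rewrite fct_sumE /=.
  by under eq_bigr => i _ do rewrite [c + h]addrC.
rewrite deriveB ?derive_cst ?subr0; last 2 first.
- by apply: derivable_sum => i; apply: dable_shift.
- by [].
rewrite derive_sum; last by move=> i; apply: dable_shift.
by apply: eq_bigr => i _; rewrite -derive1E d1_shift.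
Qed.
Lemma d1_affine_ext (R : realType) (f : R -> R) (a b : R) :
  (forall h, f h = a + h * b) -> derive1 f 0 = b.
Proof. by move=> hf; rewrite (_ : f = fun h => a + h * b) ?d1_affine //; apply/funext. Qed.
From mathcomp Require Import zify.

Lemma rank_val (T : finType) (x : T) : (enum_rank x : nat) = index x (enum T).
Proof.
rewrite -{2}(nth_enum_rank x x) index_uniq ?enum_uniq //.
by rewrite -cardE ltn_ord.
Qed.
Lemma enum_sumE (A B : finType) : enum {: A + B} = map inl (enum A) ++ map inr (enum B).
Proof. by rewrite !enumT [in LHS]unlock. Qed.
Lemma rank_inl (A B : finType) (a : A) : (enum_rank (inl a : A + B) : nat) = enum_rank a.
Proof.
rewrite !rank_val enum_sumE index_cat (mem_map (@inl_inj _ _)) mem_enum.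
by rewrite index_map //; apply: inl_inj.
Qed.
Lemma rank_inr (A B : finType) (b : B) : (enum_rank (inr b : A + B) : nat) = (#|A| + enum_rank b)%N.
Proof.
rewrite !rank_val enum_sumE index_cat.
have -> : (inr b \in [seq inl x | x <- enum A]) = false.
  by apply/negbTE/mapP => -[].
by rewrite size_map -cardE index_map //; apply: inr_inj.
Qed.
Lemma rank_ord n (k : 'I_n) : (enum_rank k : nat) = k.
Proof. by rewrite enum_rank_ord. Qed.
Lemma rank_pair_lt S C (p : 'I_S * 'I_C) : (enum_rank p < S * C)%N.
Proof.
have e : #|{: 'I_S * 'I_C}| = (S * C)%N by rewrite card_prod !card_ord.
by rewrite -e ltn_ord.
Qed.

Lemma uncurry3_T (R : realType) C (f : R -> R -> 'rV[R]_C -> R) P T x (h : R) :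
  uncurry3 f (row_mx (const_mx P : 'rV_1) (row_mx (const_mx T : 'rV_1) x)
     + h *: delta_mx 0 (rshift 1 (lshift C ord0))) = f P (h + T) x.
Proof.
rewrite delta_mx_rshift delta_mx_lshift !scale_row_mx !add_row_mx /uncurry3.
rewrite !row_mxKl !row_mxKr !scaler0 !addr0 (@row_mxKl _ 1 1 C) !mxE mulr1 addrC.
by [].
Qed.
Lemma derivable_T (R : realType) C (f : R -> R -> 'rV[R]_C -> R) P T x :
  C1 (uncurry3 f) -> derivable (fun T' => f P T' x) T 1.
Proof.
move=> [hd _].
have := hd (rshift 1 (lshift C ord0)) (row_mx (const_mx P : 'rV_1) (row_mx (const_mx T : 'rV_1) x)).
rewrite /derivable /=.
set F := (fun h => _). set G := (fun h => _).
suff -> : F = G by [].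
by apply/funext => h; rewrite /F /G /= !uncurry3_T addr0 add0r.
Qed.

Section Gen.
Variable R : realType.
Variables S C : nat.
Hypothesis hS : (2 <= S)%N.
Variable fvle : 'I_C -> R -> R -> 'rV[R]_C -> R.
Variables fhl fhv : R -> 'rV[R]_C -> R.
Variable fholdup : R -> R.
Variables eps P Q Tc Pdot : R.
Variable n : nat -> R.
Variable xh : nat -> nat -> R.

Definition ent (e : algv R) (r c : Idx S C) : R :=
  derive1 (fun h => gres fvle fhl fhv fholdup eps P Q Tc Pdot n xh (pert e c h) r) 0.

Lemma aebal_V (aV V' : nat -> R) ay aH aT axC aL j :
  V' j = aV j -> V' j.-1 = aV j.-1 ->
  aebal S fvle fhl fhv eps P Q Tc Pdot n xh (AlgV V' ay aH aT axC aL) j =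
  aebal S fvle fhl fhv eps P Q Tc Pdot n xh (AlgV aV ay aH aT axC aL) j.
Proof.
move=> h1 h2; rewrite /aebal /=.
case: ifP => [/eqP Ej | _]; first by subst j; rewrite h1.
case: ifP => [/eqP Ej | _]; first by subst j; rewrite h1 h2.
by rewrite h1 h2.
Qed.

Lemma rkV (k : 'I_S) : (enum_rank (inl (inl (inl (inl (inl k)))) : Idx S C) : nat) = k.
Proof. by rewrite !rank_inl rank_ord. Qed.
Lemma rkY (p : 'I_S * 'I_C) : (enum_rank (inl (inl (inl (inl (inr p)))) : Idx S C) : nat) = (S + enum_rank p)%N.
Proof. by rewrite !rank_inl rank_inr card_ord. Qed.
Lemma rkH (k : 'I_S) : (enum_rank (inl (inl (inl (inr k))) : Idx S C) : nat) = (S + S * C + k)%N.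
Proof. by rewrite !rank_inl rank_inr rank_ord card_sum card_prod !card_ord. Qed.
Lemma rkT (k : 'I_S) : (enum_rank (inl (inl (inr k)) : Idx S C) : nat) = (S + S * C + S + k)%N.
Proof. by rewrite !rank_inl rank_inr rank_ord !card_sum card_prod !card_ord. Qed.
Lemma rkX (k : 'I_S) : (enum_rank (inl (inr k) : Idx S C) : nat) = (S + S * C + S + S + k)%N.
Proof. by rewrite !rank_inl rank_inr rank_ord !card_sum card_prod !card_ord. Qed.
Lemma rkL (k : 'I_S.-1) : (enum_rank (inr k : Idx S C) : nat) = (S + S * C + S + S + S + k)%N.
Proof. by rewrite rank_inr rank_ord !card_sum card_prod !card_ord. Qed.

Lemma ent_zero e r c : (enum_rank c < enum_rank r)%N -> ent e r c = 0.
Proof.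
move=> hlt; rewrite /ent; apply: d1_const => h.
have hne : r != c by move: hlt; case: eqP => // ->; rewrite ltnn.
case: e => aV0 ay0 aH0 aT0 axC0 aL0.
move: hlt hne.
case: r => [[[[[k|[k i]]|k]|k]|k]|k]; case: c => [[[[[k'|[k' i']]|k']|k']|k']|k'];
 rewrite ?rkV ?rkY ?rkH ?rkT ?rkX ?rkL => hlt hne;
 try (have ? := ltn_ord k); try (have ? := ltn_ord k');
 try reflexivity;
 try (have ? := @rank_pair_lt _ _ (k, i));
 try (have ? := @rank_pair_lt _ _ (k', i'));
 try (exfalso; lia).
all: try (exfalso; lia).
- have e1 : (S - k == S - k')%N = false by lia.
  have e2 : ((S - k).-1 == S - k')%N = false by lia.
  by rewrite /= (@aebal_V aV0 (updn aV0 (S - k') h)) ?(@aebal_V aV0 (updn aV0 (S - k') 0)) // /updn ?e1 ?e2.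
- have e : ((k.+1 == k'.+1) && (i.+1 == i'.+1)) = false.
    apply/negbTE/negP => /andP[hk hi]; move: hne.
    rewrite !eqSS in hk hi.
    have -> : k = k' by apply/val_inj/eqP.
    have -> : i = i' by apply/val_inj/eqP.
    by rewrite eqxx.
  by rewrite /= /ydef /= /updn2 /= e.
all: have e : (k.+1 == k'.+1)%N = false by lia.
all: rewrite /=; unfold edef, ysum, xsum, hold, updn; rewrite /= ?e.
all: reflexivity.
Qed.

Lemma det_jac e : \det (jac S fvle fhl fhv fholdup eps P Q Tc Pdot n xh e) =
  \prod_(x : Idx S C) ent e x x.
Proof.
rewrite -det_tr det_trig; last first.
  apply/is_trig_mxP => i j lij; rewrite !mxE; apply: ent_zero.
  by rewrite !enum_valK.
rewrite (reindex (@enum_rank (Idx S C))) /=; last by apply: onW_bij; exact: enum_rank_bij.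
by apply: eq_bigr => x _; rewrite !mxE enum_rankK.
Qed.

Lemma dotvD (a u v : 'rV[R]_C) : dotv a (u + v) = dotv a u + dotv a v.
Proof. by rewrite /dotv -big_split; apply: eq_bigr => i _; rewrite mxE mulrDr. Qed.
Lemma dotvN (a u : 'rV[R]_C) : dotv a (- u) = - dotv a u.
Proof. by rewrite /dotv -sumrN; apply: eq_bigr => i _; rewrite mxE mulrN. Qed.
Lemma dotvZ (a u : 'rV[R]_C) c : dotv a (c *: u) = c * dotv a u.
Proof. by rewrite /dotv mulr_sumr; apply: eq_bigr => i _; rewrite mxE mulrCA. Qed.

Lemma xrow_irr (e1 e2 : algv R) : axC e1 = axC e2 -> Defs.xrow C xh e1 = Defs.xrow C xh e2.
Proof. by move=> h; rewrite /Defs.xrow h. Qed.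

Lemma entY e (p : 'I_S * 'I_C) :
  ent e (inl (inl (inl (inl (inr p))))) (inl (inl (inl (inl (inr p))))) = 1.
Proof.
case: p => k i; rewrite /ent; case: e => aV0 ay0 aH0 aT0 axC0 aL0 /=.
rewrite /ydef /= /updn2 !eqxx /=.
apply: (@d1_affine_ext R _ (ay0 k.+1 i.+1 - fvle i P (aT0 k.+1)
   (Defs.xrow C xh (AlgV aV0 ay0 aH0 aT0 axC0 aL0) k.+1))) => h.
rewrite (@xrow_irr _ (AlgV aV0 ay0 aH0 aT0 axC0 aL0)) //.
by rewrite mulr1 addrAC.
Qed.

Lemma entH e (k : 'I_S) :
  ent e (inl (inl (inl (inr k)))) (inl (inl (inl (inr k)))) = 1.
Proof.
rewrite /ent; case: e => aV0 ay0 aH0 aT0 axC0 aL0 /=.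
apply: (@d1_affine_ext R _ (aH0 k.+1 - n k.+1 * fhl (aT0 k.+1)
   (Defs.xrow C xh (AlgV aV0 ay0 aH0 aT0 axC0 aL0) k.+1))) => h.
rewrite /edef /= /updn eqxx (@xrow_irr _ (AlgV aV0 ay0 aH0 aT0 axC0 aL0)) //.
by rewrite mulr1 addrAC.
Qed.

Lemma entX e (k : 'I_S) :
  ent e (inl (inr k)) (inl (inr k)) = 1.
Proof.
rewrite /ent; case: e => aV0 ay0 aH0 aT0 axC0 aL0 /=.
apply: (@d1_affine_ext R _ (axC0 k.+1 - 1 + \sum_(1 <= i < C) xh k.+1 i)) => h.
rewrite /xsum /= /updn eqxx mulr1.
by ring.
Qed.

Lemma entL e (k : 'I_S.-1) (hd : forall z, derivable fholdup z 1) :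
  ent e (inr k) (inr k) = - derive1 fholdup (aL e k.+1).
Proof.
rewrite /ent; case: e => aV0 ay0 aH0 aT0 axC0 aL0 /=.
rewrite /hold /= /updn eqxx.
exact: d1_negshift.
Qed.

Lemma entT e (k : 'I_S) (hd : forall i, C1 (uncurry3 (fvle i))) :
  ent e (inl (inl (inr k))) (inl (inl (inr k))) =
  sdT fvle P (aT e k.+1) (Defs.xrow C xh e k.+1).
Proof.
rewrite /ent; case: e => aV0 ay0 aH0 aT0 axC0 aL0 /=.
rewrite /ysum /= /updn eqxx.
rewrite (@d1_sumshift R C (fun i T' => fvle i P T' (Defs.xrow C xh (AlgV aV0 ay0 aH0 aT0 axC0 aL0) k.+1)) (aT0 k.+1)) //.
by move=> i; apply: derivable_T.
Qed.

Definition Dv (e : algv R) (j : nat) : R :=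
  let x := Defs.xrow C xh e in let y := yrow C e in let T := aT e in
  if j == S then
    - eps * fhl (T S) (x S) - eps * dotv (avec fvle fhl P (T S) (x S)) (y S - x S)
    - (1 - eps) * fhl Tc (y S) + fhv (T S) (y S)
  else - fhl (T j) (x j) - dotv (avec fvle fhl P (T j) (x j)) (y j - x j) + fhv (T j) (y j).

Lemma entV e (k : 'I_S) :
  ent e (inl (inl (inl (inl (inl k))))) (inl (inl (inl (inl (inl k))))) = Dv e (S - k).
Proof.
rewrite /ent; case: e => aV0 ay0 aH0 aT0 axC0 aL0 /=.
have : (1 <= S - k <= S)%N by have := ltn_ord k; lia.
move: (S - k)%N => j /andP[hj1 hjS].
apply: (@d1_affine_ext R _ (aebal S fvle fhl fhv eps P Q Tc Pdot n xh
   (AlgV aV0 ay0 aH0 aT0 axC0 aL0) j)) => h.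
rewrite /aebal /Dv /= /Defs.xrow /yrow /= /updn.
case: ifP => [/eqP j1 | jn1].
  subst j; have -> : (1 == S)%N = false by lia.
  rewrite eqxx !(dotvD, dotvN, dotvZ); ring.
case: ifP => [/eqP jS | jnS].
  subst j; have -> : (S.-1 == S)%N = false by lia.
  rewrite eqxx !(dotvD, dotvN, dotvZ); ring.
have -> : (j.-1 == j)%N = false by lia.
rewrite eqxx !(dotvD, dotvN, dotvZ); ring.
Qed.
End Gen.

Theorem mainTheorem10 (R : realType) (S C : nat) (hS : (2 <= S)%N) (hC : (2 <= C)%N)
  (I : set R) (hI : is_interval I)
  (fvle : 'I_C -> R -> R -> 'rV[R]_C -> R) (fhl fhv : R -> 'rV[R]_C -> R)
  (fholdup : R -> R)
  (hvle : forall i : 'I_C, C2 (uncurry3 (fvle i)))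
  (hhl : C2 (uncurry2 fhl)) (hhv : C1 (uncurry2 fhv)) (hhold : C1fun fholdup)
  (eps P Q Tc : R -> R)
  (heps : C1_on I eps) (hP : C1_on I P) (hQ : C1_on I Q) (hTc : C1_on I Tc)
  (n V H T L : nat -> R -> R) (x y : nat -> nat -> R -> R)
  (hsol : is_solution S fvle fhl fhv fholdup I eps P Q Tc n V H T L x y)
  (hL : forall t, I t -> forall j, (1 <= j <= S.-1)%N -> derive1 fholdup (L j t) != 0)
  (hsum : forall t, I t -> forall j, (1 <= j <= S)%N ->
     sdT fvle (P t) (T j t) (xvec C x j t) != 0) :
  (forall t, I t ->
     \det (jac_at S fvle fhl fhv fholdup I eps P Q Tc n V H T L x y t) != 0) <->
  (forall t, I t ->
     - eps t * fhl (T S t) (xvec C x S t)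
     - eps t * dotv (avec fvle fhl (P t) (T S t) (xvec C x S t)) (yvec C y S t - xvec C x S t)
     - (1 - eps t) * fhl (Tc t) (yvec C y S t) + fhv (T S t) (yvec C y S t) != 0
   /\ (forall j, (1 <= j <= S.-1)%N ->
     - fhl (T j t) (xvec C x j t)
     - dotv (avec fvle fhl (P t) (T j t) (xvec C x j t)) (yvec C y j t - xvec C x j t)
     + fhv (T j t) (yvec C y j t) != 0)).
Proof.
have xrowE : forall j t, Defs.xrow C (x_at x t) (alg_at C V H T L x y t) j = xvec C x j t.
  by move=> j t; apply/rowP => i; rewrite !mxE; case: eqP => [->|].
have yrowE : forall j t, yrow C (alg_at C V H T L x y t) j = yvec C y j t.
  by move=> j t; apply/rowP => i; rewrite !mxE.
have dh : forall z, derivable fholdup z 1 := hhold.1.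
have dv : forall i, C1 (uncurry3 (fvle i)) := fun i => (hvle i).1.
have key : forall t, I t ->
  (\det (jac_at S fvle fhl fhv fholdup I eps P Q Tc n V H T L x y t) != 0) <->
  (- eps t * fhl (T S t) (xvec C x S t)
     - eps t * dotv (avec fvle fhl (P t) (T S t) (xvec C x S t)) (yvec C y S t - xvec C x S t)
     - (1 - eps t) * fhl (Tc t) (yvec C y S t) + fhv (T S t) (yvec C y S t) != 0
   /\ (forall j, (1 <= j <= S.-1)%N ->
     - fhl (T j t) (xvec C x j t)
     - dotv (avec fvle fhl (P t) (T j t) (xvec C x j t)) (yvec C y j t - xvec C x j t)
     + fhv (T j t) (yvec C y j t) != 0)).
  move=> t It; rewrite /jac_at (det_jac _ _ _ hS); split.
  - move/prodf_neq0 => Hd; split.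
    + have k0 : (0 < S)%N by lia.
      have := Hd (inl (inl (inl (inl (inl (Ordinal k0)))))) isT.
      by rewrite (entV _ _ _ hS) /Dv /= subn0 eqxx xrowE yrowE.
    + move=> j /andP[j1 jS].
      have kj : (S - j < S)%N by lia.
      have := Hd (inl (inl (inl (inl (inl (Ordinal kj)))))) isT.
      rewrite (entV _ _ _ hS) /Dv /=.
      have -> : (S - (S - j))%N = j by lia.
      have -> : (j == S) = false by lia.
      by rewrite xrowE yrowE.
  - move=> [c1 c2]; apply/prodf_neq0 => -[[[[[k|p]|k]|k]|k]|k] _.
    + rewrite (entV _ _ _ hS) /Dv /=; case: ifP => [_|jn].
        by rewrite xrowE yrowE.
      rewrite xrowE yrowE; apply: c2.
      by have := ltn_ord k; move: jn; lia.
    + by rewrite entY oner_neq0.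
    + by rewrite entH oner_neq0.
    + rewrite entT // xrowE; apply: hsum => //.
      by have := ltn_ord k; lia.
    + by rewrite entX oner_neq0.
    + rewrite entL // oppr_eq0; apply: hL => //.
      by have := ltn_ord k; lia.
split.
- by move=> Hd t It; apply/(key t It); apply: Hd.
- by move=> Hc t It; apply/(key t It); apply: Hc.
Qed.
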